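(* Let $\mathbf{C}=\mathbf{C}_1\,\dot\cup\,\mathbf{C}_2$ and $\mathbf{B}\in\dot{\mathbb{P}}(\mathbb{L}(\mathbf{C}_1))$ with $|\mathbf{B}|=|\mathbf{C}_1|$. Then $\mathbf{B}$ is singular for $\mathcal{D}(\mathbf{C},\Omega)$ if and only if there exists $\omega^*\in\Omega$ such that for all values $\mathbf{c}_2^*$ of $\mathbf{C}_2$ and all values $\mathbf{b}$ of the literals of $\mathbf{B}$: $D_{\mathbf{B}=\mathbf{b},\mathbf{C}_2=\mathbf{c}_2^*}(\omega^* )=1$ if and only if $\mathbf{b}=\mathbf{1}$. (Equivalently, $D_{\mathbf{c}}(\omega^* )=(\bigwedge(\mathbf{B}))_{\mathbf{c}}$ for all $\mathbf{c}$.)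
   Context: Events are binary random variables on a population $\Omega$; $\overline{X}=1-X$; $\mathbb{L}(\mathbf{C})=\mathbf{C}\cup\{\overline{X}:X\in\mathbf{C}\}$; $\dot{\mathbb{P}}(\mathbb{L}(\mathbf{C}))$ is the set of subsets of $\mathbb{L}(\mathbf{C})$ not containing both $X$ and $\overline{X}$; $(L)_{\mathbf{c}}$ is the value of literal $L$ under assignment $\mathbf{c}$; $\bigwedge(\mathbf{B})=\min_{L\in\mathbf{B}}L$. Potential outcomes $\mathcal{D}(\mathbf{C},\Omega)$: $D_{\mathbf{c}}(\omega)\in\{0,1\}$. Since $|\mathbf{B}|=|\mathbf{C}_1|$, values $\mathbf{b}$ for the literals of $\mathbf{B}$ determine an assignment to $\mathbf{C}_1$. $\mathbf{B}\subseteq\mathbb{L}(\mathbf{C})$ is a sufficient cause for $D$ relative to $\mathbf{C}$ for $\omega^*$ if some $\mathbf{c}^*$ has $(\bigwedge(\mathbf{B}))_{\mathbf{c}^*}=1$ and $D_{\mathbf{c}}(\omega^* )=1$ for every $\mathbf{c}$ with $(\bigwedge(\mathbf{B}))_{\mathbf{c}}=1$; it is minimal if no proper subset is a sufficient cause for $\omega^*$. A minimal sufficient cause $\mathbf{B}$ for $\omega^*$ is singular (relative to $\mathbf{C}$, for $\omega^*$) if there is no $\mathbf{B}'\in\dot{\mathbb{P}}(\mathbb{L}(\mathbf{C}))$, $\mathbf{B}'\neq\mathbf{B}$, that is also a minimal sufficient cause for $D$ relative to $\mathbf{C}$ for $\omega^*$. $\mathbf{B}$ is singular for $\mathcal{D}(\mathbf{C},\Omega)$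 if it is singular for some $\omega^*\in\Omega$. *)

(* Defs.v *)
From mathcomp Require Import all_boot.
Set Implicit Arguments. Unset Strict Implicit. Unset Printing Implicit Defensive.

(* The set of causes C is the finite type V of variables; an assignment c of
   values to C is a finite function V -> bool.  A literal is a pair (X, pol):
   (X, true) stands for X and (X, false) for its complement 1 - X. *)
Definition assign (V : finType) := {ffun V -> bool}.
Definition literal (V : finType) := (V * bool)%type.

Definition lit_val (V : finType) (L : literal V) (c : assign V) : bool :=
  if L.2 then c L.1 else ~~ c L.1.

Definition conj_val (V : finType) (B : {set literal V}) (c : assign V) : bool :=
  [forall L in B, lit_val L c].

(* B in P-dot(L(C)) : no variable appears with both polarities *)
Definition consistent (V : finType) (B : {set literal V}) : Prop :=
  forall X : V, ~ ((X, true) \in B /\ (X, false) \in B).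

Definition lits_over (V : finType) (C1 : {set V}) (B : {set literal V}) : Prop :=
  forall L, L \in B -> L.1 \in C1.

(* Potential outcomes D_c(omega) : D omega c *)
Definition sufficient_cause (V : finType) (Omega : Type)
  (D : Omega -> assign V -> bool) (B : {set literal V}) (w : Omega) : Prop :=
  (exists c, conj_val B c) /\ (forall c, conj_val B c -> D w c).

Definition minimal_sufficient_cause (V : finType) (Omega : Type)
  (D : Omega -> assign V -> bool) (B : {set literal V}) (w : Omega) : Prop :=
  sufficient_cause D B w /\
  (forall B' : {set literal V}, B' \proper B -> ~ sufficient_cause D B' w).

Definition singular_for (V : finType) (Omega : Type)
  (D : Omega -> assign V -> bool) (B : {set literal V}) (w : Omega) : Prop :=
  minimal_sufficient_cause D B w /\
  (forall B' : {set literal V}, consistent B' -> B' <> B -> ~ minimal_sufficient_cause D B' w).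

Definition singular (V : finType) (Omega : Type)
  (D : Omega -> assign V -> bool) (B : {set literal V}) : Prop :=
  exists w, singular_for D B w.

(* Main.v *)
From Stdlib Require Import Classical.
Require Import Defs.
From mathcomp Require Import all_boot.


Lemma conjP (V : finType) (B : {set literal V}) c :
  conj_val B c <-> (forall L, L \in B -> lit_val L c = true).
Proof. split; [move/forall_inP => H L /H //| move=> H; apply/forall_inP => L /H //]. Qed.

Lemma litE (V : finType) (L : literal V) c : lit_val L c = (c L.1 == L.2).
Proof. by case: L => X [] /=; rewrite /lit_val /=; case: (c X). Qed.

Lemma imp_sub (V : finType) (S T : {set literal V}) :
  (exists c, conj_val T c) -> (forall c, conj_val T c -> conj_val S c) -> S \subset T.
Proof.
move=> [c0 Hc0] H; apply/subsetP => [[X p]] LS.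
case: (boolP ((X, p) \in T)) => // LT.
have HT := proj1 (conjP _ _ _) Hc0.
case: (boolP ((X, ~~ p) \in T)) => LT'.
  have := HT _ LT'; have := proj1 (conjP _ _ _) (H _ Hc0) _ LS.
  by rewrite !litE /= => /eqP ->; case: p {LS LT LT'}.
pose c' : assign V := [ffun Y => if Y == X then ~~ p else c0 Y].
have : conj_val T c'.
  apply/conjP => [[Y q]] YT; rewrite litE /= ffunE.
  case: (Y =P X) => [EY|NE]; last by move: (HT _ YT); rewrite litE /= => /eqP ->; exact: eqxx.
  subst Y; move: YT; case: (q =P p) => [->|/eqP]; first by rewrite (negbTE LT).
  by move=> NE; move: NE; case: (p); case: (q).
move=> /H/conjP/(_ _ LS); rewrite litE /= ffunE eqxx.
by case: (p).
Qed.

Lemma exists_min (V : finType) (Omega : Type) (D : Omega -> assign V -> bool) w :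
  forall n (S : {set literal V}), #|S| <= n -> sufficient_cause D S w ->
  exists S' : {set literal V}, S' \subset S /\ minimal_sufficient_cause D S' w.
Proof.
elim=> [|n IH] S Hn Hs.
  exists S; split => //; split => // B' /proper_card; move: Hn.
  by rewrite leqn0 => /eqP ->.
destruct (classic (forall B' : {set literal V}, B' \proper S -> ~ sufficient_cause D B' w)) as [H|H].
  by exists S.
apply not_all_ex_not in H as [B' H].
apply imply_to_and in H as [HP HB'].
apply NNPP in HB'.
have [S' [S'B' M]] := IH B' (leq_trans (proper_card HP) Hn) HB'.
exists S'; split => //; apply: subset_trans S'B' (proper_sub HP).
Qed.

Theorem mainTheorem12 (V : finType) (Omega : Type)
  (D : Omega -> assign V -> bool) (C1 : {set V}) (B : {set literal V}) :
  consistent B -> lits_over C1 B -> #|B| = #|C1| ->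
  (singular D B <->
   exists w : Omega, forall c : assign V,
     D w c = true <-> (forall L, L \in B -> lit_val L c = true)).
Proof.
move=> HB _ _; split.
- move=> [w [[[_ Hsuf] Hmin] Huniq]]; exists w => c; split; last first.
    by move/conjP/Hsuf.
  move=> Dc; apply/conjP; apply: NNPP => NB.
  pose Bc : {set literal V} := [set L | lit_val L c].
  have Hs : sufficient_cause D Bc w.
    split; first by exists c; apply/conjP => L; rewrite inE.
    move=> c' /conjP Hc'.
    suff -> : c' = c by [].
    apply/ffunP => X; have := Hc' (X, c X); rewrite inE litE /= eqxx => /(_ isT).
    by rewrite litE /= => /eqP.
  have [S' [S'B M]] := @exists_min _ _ D w #|Bc| Bc (leqnn _) Hs.
  apply: (Huniq S') M.
  + move=> X [H1 H2]; move: (subsetP S'B _ H1) (subsetP S'B _ H2).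
    by rewrite !inE !litE /= => /eqP -> .
  + move=> E; subst S'; apply: NB; apply/conjP => L /(subsetP S'B); by rewrite inE.
- move=> [w Hw]; exists w.
  have Hex : exists c, conj_val B c.
    exists [ffun X => (X, true) \in B]; apply/conjP => [[X p]] XB.
    rewrite litE /= ffunE; case: p XB => XB; first by rewrite XB.
    by case: (boolP ((X, true) \in B)) => // XT; case: (HB X).
  have Hsuf : sufficient_cause D B w by split => // c /conjP/Hw.
  split; [split => // B' HP HsB'|].
    have := @imp_sub _ B B' (proj1 HsB') (fun c Hc => proj2 (conjP _ _ _) (proj1 (Hw c) (proj2 HsB' c Hc))).
    by move=> Hsub; move: HP; rewrite properE Hsub andbF.
  move=> B' _ NE [[Hex' Hs'] Hmin'].
  have Hsub := @imp_sub _ B B' Hex' (fun c Hc => proj2 (conjP _ _ _) (proj1 (Hw c) (Hs' c Hc))).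
  apply: (Hmin' B) => //; rewrite properEneq Hsub andbT.
  by apply/eqP => E; apply NE.
Qed.
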